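(* Let $N\ge 2$, $t\ge 1$, $r\ge 1$ be integers with $m=t+r\le N$, and let $K\ge N$. Consider the action of the group $\mathcal{L}$ (defined in the context) on pairs $(\mathbf{z},\mathbf{S})$, with $\mathbf{z}\in\mathbb{C}^{N}$ and $\mathbf{S}\in\mathbb{C}^{N\times N}$ Hermitian positive definite, given by $l(\mathbf{z},\mathbf{S})=(\mathbf{G}\mathbf{z}+\mathbf{f},\mathbf{G}\mathbf{S}\mathbf{G}^\dagger)$ for $(\mathbf{G},\mathbf{f})\in\mathcal{L}$. Then a maximal invariant statistic with respect to $\mathcal{L}$ is $$\mathbf{t}_1(\mathbf{z},\mathbf{S})=\begin{cases}\begin{bmatrix}\mathbf{z}_{2.3}^\dagger\mathbf{S}_{2.3}^{-1}\mathbf{z}_{2.3}\\ \mathbf{z}_3^\dagger\mathbf{S}_{33}^{-1}\mathbf{z}_3\end{bmatrix}, & m<N,\\[2mm] \mathbf{z}_2^\dagger\mathbf{S}_{22}^{-1}\mathbf{z}_2, & m=N,\end{cases}$$ where $\mathbf{z}_{2.3}=\mathbf{z}_2-\mathbf{S}_{23}\mathbf{S}_{33}^{-1}\mathbf{z}_3$ and $\mathbf{S}_{2.3}=\mathbf{S}_{22}-\mathbf{S}_{23}\mathbf{S}_{33}^{-1}\mathbf{S}_{32}$.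
   Context: Partition $\mathbf{z}=[\mathbf{z}_1^T\ \mathbf{z}_2^T\ \mathbf{z}_3^T]^T$ with $\mathbf{z}_1\in\mathbb{C}^{t}$, $\mathbf{z}_2\in\mathbb{C}^{r}$, $\mathbf{z}_3\in\mathbb{C}^{N-m}$, and partition $\mathbf{S}$ conformably into blocks $\mathbf{S}_{ij}$, $i,j\in\{1,2,3\}$, of sizes given by replacing $1,2,3$ with $t,r,N-m$. When $m=N$ the ''3''-blocks are absent. (In the application, $\mathbf{S}=\sum_{k=1}^K\mathbf{z}_k\mathbf{z}_k^\dagger$ is the sample matrix of $K$ secondary data vectors.) The set $\mathcal{G}$ consists of all nonsingular $N\times N$ block upper-triangular matrices $\mathbf{G}=\begin{bmatrix}\mathbf{G}_{11}&\mathbf{G}_{12}&\mathbf{G}_{13}\\ \mathbf{0}&\mathbf{G}_{22}&\mathbf{G}_{23}\\ \mathbf{0}&\mathbf{0}&\mathbf{G}_{33}\end{bmatrix}$ with $\mathbf{G}_{11}\in GL(t)$, $\mathbf{G}_{22}\in GL(r)$, $\mathbf{G}_{33}\in GL(N-m)$ (block sizes conforming to the partition above; the third block row/column absent if $m=N$). The set $\mathcal{F}$ consists of all $\mathbf{f}=[\mathbf{f}_{11}^T\ \mathbf{0}^T]^T\in\mathbb{C}^N$ with $\mathbf{f}_{11}\in\mathbb{C}^{t}$. The group $\mathcal{L}$ is $\mathcal{G}\times\mathcal{F}$ with operation $(\mathbf{G}_1,\mathbf{f}_1)\circ(\mathbf{G}_2,\mathbf{f}_2)=(\mathbf{G}_2\mathbf{G}_1,\mathbf{G}_2\mathbf{f}_1+\mathbf{f}_2)$.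 A statistic $\mathbf{t}$ is maximal invariant with respect to $\mathcal{L}$ if (i) $\mathbf{t}(\mathbf{z},\mathbf{S})=\mathbf{t}(l(\mathbf{z},\mathbf{S}))$ for all $l\in\mathcal{L}$, and (ii) $\mathbf{t}(\mathbf{z},\mathbf{S})=\mathbf{t}(\bar{\mathbf{z}},\bar{\mathbf{S}})$ implies there exists $l\in\mathcal{L}$ with $(\mathbf{z},\mathbf{S})=l(\bar{\mathbf{z}},\bar{\mathbf{S}})$. *)

(* Defs.v *)
From HB Require Import structures.
From mathcomp Require Import all_boot all_order all_algebra.
From mathcomp Require Import reals complex.
Set Implicit Arguments. Unset Strict Implicit. Unset Printing Implicit Defensive.
Import Order.TTheory GRing.Theory Num.Theory.
Local Open Scope ring_scope.

Section Defs.
Variable R : realType.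
Local Notation C := R[i].
(* block sizes: t, r, n3 = N - m ;  N = t + r + n3 *)
Variables t r n3 : nat.
Local Notation N := (t + r + n3)%N.

Definition ctr m n (A : 'M[C]_(m, n)) : 'M[C]_(n, m) := (map_mx Num.conj A)^T.

Definition hermitian_pd (S : 'M[C]_N) : Prop :=
  ctr S = S /\ forall v : 'cV[C]_N, v != 0 -> 0 < (ctr v *m S *m v) 0 0.

Definition z1 (z : 'cV[C]_N) : 'cV[C]_t := usubmx (usubmx z).
Definition z2 (z : 'cV[C]_N) : 'cV[C]_r := dsubmx (usubmx z).
Definition z3 (z : 'cV[C]_N) : 'cV[C]_n3 := dsubmx z.
Definition S22 (S : 'M[C]_N) : 'M[C]_r := drsubmx (ulsubmx S).
Definition S23 (S : 'M[C]_N) : 'M[C]_(r, n3) := dsubmx (ursubmx S).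
Definition S32 (S : 'M[C]_N) : 'M[C]_(n3, r) := rsubmx (dlsubmx S).
Definition S33 (S : 'M[C]_N) : 'M[C]_n3 := drsubmx S.

Definition z23 z S := z2 z - S23 S *m invmx (S33 S) *m z3 z.
Definition S23s S := S22 S - S23 S *m invmx (S33 S) *m S32 S.

Definition t1 (z : 'cV[C]_N) (S : 'M[C]_N) : seq C :=
  if n3 == 0%N then [:: (ctr (z2 z) *m invmx (S22 S) *m z2 z) 0 0]
  else [:: (ctr (z23 z S) *m invmx (S23s S) *m z23 z S) 0 0;
           (ctr (z3 z) *m invmx (S33 S) *m z3 z) 0 0].

Definition in_calG (G : 'M[C]_N) : Prop :=
  G \in unitmx /\
  (dlsubmx G = 0 /\ dlsubmx (ulsubmx G) = 0) /\
  [/\ ulsubmx (ulsubmx G) \in unitmx,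
      drsubmx (ulsubmx G) \in unitmx &
      drsubmx G \in unitmx].

Definition in_calF (f : 'cV[C]_N) : Prop :=
  dsubmx (usubmx f) = 0 /\ dsubmx f = 0.

Definition in_calL (l : 'M[C]_N * 'cV[C]_N) : Prop := in_calG l.1 /\ in_calF l.2.

Definition act (l : 'M[C]_N * 'cV[C]_N) (x : 'cV[C]_N * 'M[C]_N)
  : 'cV[C]_N * 'M[C]_N :=
  (l.1 *m x.1 + l.2, l.1 *m x.2 *m ctr l.1).

Definition in_dom (x : 'cV[C]_N * 'M[C]_N) : Prop := hermitian_pd x.2.

Definition maximal_invariant (T : Type) (s : 'cV[C]_N -> 'M[C]_N -> T) : Prop :=
  (forall x l, in_dom x -> in_calL l -> s (act l x).1 (act l x).2 = s x.1 x.2) /\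
  (forall x y, in_dom x -> in_dom y -> s x.1 x.2 = s y.1 y.2 ->
     exists2 l, in_calL l & x = act l y).
End Defs.

(* Main.v *)
Require Import Defs.
From HB Require Import structures.
From mathcomp Require Import all_boot all_order all_algebra.
From mathcomp Require Import reals complex.
From mathcomp Require Import ring.
From mathcomp Require Import spectral sesquilinear.
Set Implicit Arguments. Unset Strict Implicit. Unset Printing Implicit Defensive.
Import Order.TTheory GRing.Theory Num.Theory.
Local Open Scope ring_scope.

Section Basics.
Variable R : realType.
Local Notation C := R[i].
Implicit Types (m n p : nat).

Lemma ctrE m n (A : 'M[C]_(m, n)) : ctr A = map_mx Num.conj (A ^T).
Proof. by rewrite /ctr map_trmx. Qed.

Lemma ctrK m n (A : 'M[C]_(m, n)) : ctr (ctr A) = A.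
Proof. by apply/matrixP => i j; rewrite !mxE conjCK. Qed.

Lemma ctrM m n p (A : 'M[C]_(m, n)) (B : 'M[C]_(n, p)) :
  ctr (A *m B) = ctr B *m ctr A.
Proof. by rewrite /ctr map_mxM trmx_mul. Qed.

Lemma ctrD m n (A B : 'M[C]_(m, n)) : ctr (A + B) = ctr A + ctr B.
Proof. by apply/matrixP => i j; rewrite !mxE rmorphD. Qed.

Lemma ctrN m n (A : 'M[C]_(m, n)) : ctr (- A) = - ctr A.
Proof. by apply/matrixP => i j; rewrite !mxE rmorphN. Qed.

Lemma ctrB m n (A B : 'M[C]_(m, n)) : ctr (A - B) = ctr A - ctr B.
Proof. by rewrite ctrD ctrN. Qed.

Lemma ctr0 m n : ctr (0 : 'M[C]_(m, n)) = 0.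
Proof. by apply/matrixP => i j; rewrite !mxE rmorph0. Qed.

Lemma ctr1 n : ctr (1%:M : 'M[C]_n) = 1%:M.
Proof. by rewrite /ctr map_mx1 trmx1. Qed.

Lemma ctrZ m n a (A : 'M[C]_(m, n)) : ctr (a *: A) = a^* *: ctr A.
Proof. by apply/matrixP => i j; rewrite !mxE rmorphM. Qed.

Lemma ctr_block m1 m2 n1 n2 (a : 'M[C]_(m1, n1)) (b : 'M[C]_(m1, n2))
  (c : 'M[C]_(m2, n1)) (d : 'M[C]_(m2, n2)) :
  ctr (block_mx a b c d) = block_mx (ctr a) (ctr c) (ctr b) (ctr d).
Proof. by rewrite /ctr map_block_mx tr_block_mx. Qed.

Lemma ctr_col m1 m2 n (a : 'M[C]_(m1, n)) (b : 'M[C]_(m2, n)) :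
  ctr (col_mx a b) = row_mx (ctr a) (ctr b).
Proof. by rewrite /ctr map_col_mx tr_col_mx. Qed.

Lemma ctr_row m n1 n2 (a : 'M[C]_(m, n1)) (b : 'M[C]_(m, n2)) :
  ctr (row_mx a b) = col_mx (ctr a) (ctr b).
Proof. by rewrite /ctr map_row_mx tr_row_mx. Qed.

Lemma ctr_unit n (A : 'M[C]_n) : (ctr A \in unitmx) = (A \in unitmx).
Proof. by rewrite /ctr unitmx_tr map_unitmx. Qed.

Lemma ctr_inv n (A : 'M[C]_n) : ctr (invmx A) = invmx (ctr A).
Proof. by rewrite /ctr map_invmx trmx_inv. Qed.

Lemma invmxM n (A B : 'M[C]_n) : A \in unitmx -> B \in unitmx ->
  invmx (A *m B) = invmx B *m invmx A.
Proof.
move=> uA uB; have uAB : A *m B \in unitmx by rewrite unitmx_mul uA.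
have e : A *m B *m (invmx B *m invmx A) = 1%:M.
  by rewrite mulmxA mulmxK // mulmxV.
by rewrite -[LHS]mulmx1 -e mulmxA mulVmx // mul1mx.
Qed.

Lemma ctr_ul m1 m2 n1 n2 (A : 'M[C]_(m1 + m2, n1 + n2)) :
  ctr (ulsubmx A) = ulsubmx (ctr A).
Proof. by rewrite -{2}[A]submxK ctr_block block_mxKul. Qed.
Lemma ctr_ur m1 m2 n1 n2 (A : 'M[C]_(m1 + m2, n1 + n2)) :
  ctr (ursubmx A) = dlsubmx (ctr A).
Proof. by rewrite -{2}[A]submxK ctr_block block_mxKdl. Qed.
Lemma ctr_dl m1 m2 n1 n2 (A : 'M[C]_(m1 + m2, n1 + n2)) :
  ctr (dlsubmx A) = ursubmx (ctr A).
Proof. by rewrite -{2}[A]submxK ctr_block block_mxKur. Qed.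
Lemma ctr_dr m1 m2 n1 n2 (A : 'M[C]_(m1 + m2, n1 + n2)) :
  ctr (drsubmx A) = drsubmx (ctr A).
Proof. by rewrite -{2}[A]submxK ctr_block block_mxKdr. Qed.

Definition qf n (x : 'cV[C]_n) (S : 'M[C]_n) := (ctr x *m invmx S *m x) 0 0.

Lemma qf_inv n (D S : 'M[C]_n) (x : 'cV[C]_n) : D \in unitmx -> S \in unitmx ->
  qf (D *m x) (D *m S *m ctr D) = qf x S.
Proof.
move=> uD uS; rewrite /qf ctrM.
have uDS : D *m S \in unitmx by rewrite unitmx_mul uD.
rewrite invmxM ?ctr_unit // invmxM // -!mulmxA mulKmx //.
by rewrite !mulmxA mulmxK ?ctr_unit.
Qed.
Definition pd n (S : 'M[C]_n) : Prop :=
  ctr S = S /\ forall v : 'cV[C]_n, v != 0 -> 0 < (ctr v *m S *m v) 0 0.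

Lemma ctr_eq0 m n (A : 'M[C]_(m, n)) : (ctr A == 0) = (A == 0).
Proof.
apply/eqP/eqP => [h|->]; last exact: ctr0.
by rewrite -[A]ctrK h ctr0.
Qed.

Lemma pd_unit n (S : 'M[C]_n) : pd S -> S \in unitmx.
Proof.
move=> [hS pS]; apply: contraT => nu.
have : kermx S != 0 by rewrite kermx_eq0 row_free_unit.
move=> /rowV0Pn [v vk vn0]; move: vk; rewrite sub_kermx => /eqP vS.
have w0 : ctr v != 0 by rewrite ctr_eq0.
have := pS _ w0; rewrite -mulmxA -{1}hS -ctrM vS ctr0 mulmx0 mxE ltxx.
by [].
Qed.

Lemma unit_inj0 n (G : 'M[C]_n) (v : 'cV[C]_n) : G \in unitmx -> v != 0 -> G *m v != 0.
Proof.
move=> uG; apply: contra => /eqP h; apply/eqP.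
by rewrite -[v](mulKmx uG) h mulmx0.
Qed.

Lemma pd_congr n (G S : 'M[C]_n) : G \in unitmx -> pd S -> pd (G *m S *m ctr G).
Proof.
move=> uG [hS pS]; split.
  by rewrite !ctrM ctrK hS mulmxA.
move=> v v0; have uG' : ctr G \in unitmx by rewrite ctr_unit.
have := pS _ (unit_inj0 uG' v0).
by rewrite ctrM ctrK !mulmxA.
Qed.

Lemma pd_dr p q (S : 'M[C]_(p + q)) : pd S -> pd (drsubmx S).
Proof.
move=> [hS pS]; split; first by rewrite ctr_dr hS.
move=> v v0; have w0 : col_mx (0 : 'cV[C]_p) v != 0.
  by rewrite col_mx_eq0 negb_and eqxx.
have := pS _ w0; rewrite ctr_col ctr0 -{1}[S]submxK mul_row_block !mul0mx !add0r.
by rewrite mul_row_col mulmx0 add0r.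
Qed.

Definition schur p q (S : 'M[C]_(p + q)) : 'M[C]_p :=
  ulsubmx S - ursubmx S *m invmx (drsubmx S) *m dlsubmx S.
Definition xs p q (z : 'cV[C]_(p + q)) (S : 'M[C]_(p + q)) : 'cV[C]_p :=
  usubmx z - ursubmx S *m invmx (drsubmx S) *m dsubmx z.

Lemma pd_schur p q (S : 'M[C]_(p + q)) : pd S -> pd (schur S).
Proof.
move=> PS; have ud := pd_unit (pd_dr PS); move: PS => [hS pS]; split.
  rewrite /schur ctrB !ctrM ctr_inv ctr_ul ctr_ur ctr_dl ctr_dr hS mulmxA.
  by [].
move=> v v0.
set w := col_mx v (- (invmx (drsubmx S) *m dlsubmx S *m v)).
have w0 : w != 0 by rewrite col_mx_eq0 negb_and v0.
have := pS _ w0; rewrite -mulmxA /w -[X in X *m col_mx _ _]submxK mul_block_col.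
rewrite !mulmxN !mulmxA (mulmxV ud) mul1mx subrr ctr_col mul_row_col mulmx0 addr0.
by rewrite /schur !mulmxBr mulmxBl !mulmxA.
Qed.
Section Lvl.
Variables p q : nat.
Implicit Types (X : 'M[C]_(p, q)) (P A : 'M[C]_p) (Q D : 'M[C]_q) (z : 'cV[C]_(p + q)).

Definition Emx (X : 'M[C]_(p, q)) : 'M[C]_(p + q) := block_mx 1%:M X 0 1%:M.
Definition dmx (P : 'M[C]_p) (Q : 'M[C]_q) : 'M[C]_(p + q) := block_mx P 0 0 Q.

Lemma prodE X P Q : Emx X *m dmx P Q *m ctr (Emx X) =
  block_mx (P + X *m Q *m ctr X) (X *m Q) (Q *m ctr X) Q.
Proof.
rewrite /Emx /dmx ctr_block ctr0 !ctr1 !mulmx_block.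
by rewrite !(mul1mx, mulmx1, mul0mx, mulmx0, addr0, add0r).
Qed.

Lemma dmx_congr A D P Q : dmx A D *m dmx P Q *m ctr (dmx A D) =
  dmx (A *m P *m ctr A) (D *m Q *m ctr D).
Proof.
rewrite /dmx ctr_block !ctr0 !mulmx_block.
by rewrite !(mul1mx, mulmx1, mul0mx, mulmx0, addr0, add0r).
Qed.

Lemma readback_dr X P Q : drsubmx (block_mx (P + X *m Q *m ctr X) (X *m Q) (Q *m ctr X) Q) = Q.
Proof. by rewrite block_mxKdr. Qed.

Lemma readback_schur X P Q : Q \in unitmx ->
  schur (block_mx (P + X *m Q *m ctr X) (X *m Q) (Q *m ctr X) Q) = P.
Proof.
move=> uQ; rewrite /schur block_mxKul block_mxKur block_mxKdr block_mxKdl.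
by rewrite mulmxK // mulmxA addrK.
Qed.

Lemma readback_xs X P Q z : Q \in unitmx ->
  xs z (block_mx (P + X *m Q *m ctr X) (X *m Q) (Q *m ctr X) Q) = usubmx z - X *m dsubmx z.
Proof.
by move=> uQ; rewrite /xs block_mxKur block_mxKdr mulmxK.
Qed.

Lemma ldl (S : 'M[C]_(p + q)) : ctr S = S -> drsubmx S \in unitmx ->
  S = Emx (ursubmx S *m invmx (drsubmx S)) *m dmx (schur S) (drsubmx S)
      *m ctr (Emx (ursubmx S *m invmx (drsubmx S))).
Proof.
move=> hS ud; rewrite prodE mulmxKV // ctrM ctr_inv ctr_dr ctr_ur hS.
rewrite mulKVmx // /schur mulmxA subrK.
by rewrite submxK.
Qed.

Lemma Emx_unit X : Emx X \in unitmx.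
Proof. by rewrite unitmxE /Emx det_ublock !det1 mulr1 unitr1. Qed.

Lemma Emx_inv X : invmx (Emx X) = Emx (- X).
Proof.
have h : Emx X *m Emx (- X) = 1%:M.
  rewrite /Emx mulmx_block !(mul1mx, mulmx1, mul0mx, mulmx0, addr0, add0r).
  by rewrite addrC subrr -scalar_mx_block.
by rewrite -[LHS]mulmx1 -h mulmxA mulVmx ?Emx_unit // mul1mx.
Qed.

Lemma level_inv A (B : 'M[C]_(p, q)) D (T : 'M[C]_(p + q)) (w f : 'cV[C]_(p + q)) :
  D \in unitmx -> drsubmx T \in unitmx -> ctr T = T -> dsubmx f = 0 ->
  let G := block_mx A B 0 D in
  [/\ drsubmx (G *m T *m ctr G) = D *m drsubmx T *m ctr D,
      dsubmx (G *m w + f) = D *m dsubmx w,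
      schur (G *m T *m ctr G) = A *m schur T *m ctr A &
      xs (G *m w + f) (G *m T *m ctr G) = A *m xs w T + usubmx f].
Proof.
move=> uD ud hT f0 G.
set Xt := ursubmx T *m invmx (drsubmx T).
set X' := (A *m Xt + B) *m invmx D.
have GE : G *m Emx Xt = Emx X' *m dmx A D.
  rewrite /G /Emx /dmx !mulmx_block.
  rewrite !(mul1mx, mulmx1, mul0mx, mulmx0, addr0, add0r).
  by rewrite /X' mulmxKV.
have eGT : G *m T *m ctr G = block_mx (A *m schur T *m ctr A + X' *m (D *m drsubmx T *m ctr D) *m ctr X')
     (X' *m (D *m drsubmx T *m ctr D)) ((D *m drsubmx T *m ctr D) *m ctr X') (D *m drsubmx T *m ctr D).
  rewrite -prodE -dmx_congr {1}(ldl hT ud) -/Xt.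
  rewrite !mulmxA GE -!mulmxA; congr (_ *m (_ *m (_ *m _))).
  by rewrite -!ctrM GE ctrM.
have uQ : D *m drsubmx T *m ctr D \in unitmx by rewrite !unitmx_mul ud uD ctr_unit uD.
have ed : dsubmx (G *m w + f) = D *m dsubmx w.
  by rewrite -[w]vsubmxK /G mul_block_col raddfD /= col_mxKd f0 addr0 mul0mx add0r col_mxKd.
split => //; first by rewrite eGT readback_dr.
  by rewrite eGT readback_schur.
rewrite eGT readback_xs // ed.
rewrite /xs raddfD /= -mul_usub_mx /G block_mxEv col_mxKu.
rewrite -[w]vsubmxK mul_row_col col_mxKu col_mxKd mulmxA /X' mulmxKV //.
rewrite mulmxBr mulmxDl !mulmxA.
rewrite addrAC opprD addrA; congr (_ + _).
by rewrite addrAC addrK.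
Qed.
Lemma level_max (S T : 'M[C]_(p + q)) (z w : 'cV[C]_(p + q)) A D :
  ctr S = S -> ctr T = T -> drsubmx S \in unitmx -> drsubmx T \in unitmx ->
  A *m schur T *m ctr A = schur S -> D *m drsubmx T *m ctr D = drsubmx S ->
  D *m dsubmx w = dsubmx z ->
  let G := block_mx A (ursubmx S *m invmx (drsubmx S) *m D
                       - A *m (ursubmx T *m invmx (drsubmx T))) 0 D in
  G *m T *m ctr G = S /\ z - G *m w = col_mx (xs z S - A *m xs w T) 0.
Proof.
move=> hS hT uS uT eA eD ez G.
set XS := ursubmx S *m invmx (drsubmx S).
set XT := ursubmx T *m invmx (drsubmx T).
have eG : G = Emx XS *m dmx A D *m Emx (- XT).
  rewrite /G /Emx /dmx !mulmx_block.
  by rewrite !(mul1mx, mulmx1, mul0mx, mulmx0, addr0, add0r) mulmxN addrC.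
split.
  have GE : G *m Emx XT = Emx XS *m dmx A D.
    by rewrite eG -Emx_inv mulmxKV ?Emx_unit.
  rewrite {1}(ldl hT uT) -/XT !mulmxA GE -!mulmxA -ctrM GE ctrM.
  rewrite !mulmxA -(mulmxA (Emx XS) (dmx A D)) -(mulmxA (Emx XS)) dmx_congr.
  by rewrite eA eD -/XS -ldl.
rewrite -[LHS]vsubmxK; congr col_mx; rewrite raddfB /=.
  rewrite -mul_usub_mx /G block_mxEv col_mxKu -{1}[w]vsubmxK mul_row_col.
  rewrite /xs mulmxBl -ez -/XS -/XT !mulmxA mulmxBr !mulmxA.
  rewrite opprD !opprB !addrA [LHS]addrAC [RHS]addrAC; congr (_ + _).
  by rewrite addrAC.
rewrite -mul_dsub_mx /G block_mxEv col_mxKd -{1}[w]vsubmxK mul_row_col.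
by rewrite mul0mx add0r ez subrr.
Qed.

End Lvl.

Section Unitary.
Variable k : nat.
Definition dot (x y : 'cV[C]_k) := (ctr x *m y) 0 0.

Lemma dotE (x y : 'cV[C]_k) : ctr x *m y = (dot x y)%:M.
Proof. exact: mx11_scalar. Qed.

Lemma ctr_entry m n (A : 'M[C]_(m, n)) i j : ctr A i j = (A j i)^*.
Proof. by rewrite /ctr !mxE. Qed.

Lemma dot_conj (x y : 'cV[C]_k) : (dot x y)^* = dot y x.
Proof.
by rewrite /dot -[ctr y *m x]ctrK ctrM ctrK ctr_entry.
Qed.

Lemma dot_eq0 (w : 'cV[C]_k) : dot w w = 0 -> w = 0.
Proof.
rewrite /dot mxE => h; apply/matrixP => i j; rewrite ord1 mxE.
have hp : forall j0 : 'I_k, predT j0 -> 0 <= ctr w 0 j0 * w j0 0.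
  by move=> j0 _; rewrite ctr_entry mulrC; exact: mul_conjC_ge0.
have := psumr_eq0P hp h isT.
move=> /(_ i).
by rewrite ctr_entry mulrC => /eqP; rewrite mul_conjC_eq0 => /eqP.
Qed.

Lemma dot_subl (x y z : 'cV[C]_k) : dot (x - y) z = dot x z - dot y z.
Proof. by rewrite {1}/dot ctrB mulmxBl !dotE -raddfB /= mxE eqxx mulr1n. Qed.

Lemma dot_subr (x y z : 'cV[C]_k) : dot z (x - y) = dot z x - dot z y.
Proof. by rewrite {1}/dot mulmxBr !dotE -raddfB /= mxE eqxx mulr1n. Qed.

Lemma unitary_map (u v : 'cV[C]_k) : dot u u = dot v v ->
  exists U : 'M[C]_k, U *m ctr U = 1%:M /\ U *m u = v.
Proof.
move=> huv; set w := u - v.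
have [w0|wn0] := eqVneq w 0.
  exists 1%:M; rewrite ctr1 mulmx1 mul1mx; split => //.
  by apply/eqP; rewrite -subr_eq0 -/w w0.
set b := dot w u; set c := dot w w.
have ebc : b + b^* = c.
  rewrite /b /c dot_conj /w !dot_subl !dot_subr huv.
  by ring.
have c0 : c != 0 by apply: contra wn0 => /eqP /dot_eq0 ->.
have b0 : b != 0 by apply: contra c0 => /eqP b0; rewrite -ebc b0 conjC0 addr0.
exists (1%:M - b^-1 *: (w *m ctr w)); split; last first.
  rewrite mulmxBl mul1mx -scalemxAl -mulmxA dotE -/b mul_mx_scalar scalerA mulVf //.
  by rewrite scale1r /w opprB addrC subrK.
clearbody w; rewrite ctrB ctr1 ctrZ ctrM ctrK mulmxBl mul1mx mulmxBr mulmx1.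
rewrite -!scalemxAl -!scalemxAr !mulmxA -[w *m ctr w *m w]mulmxA dotE -/c mul_mx_scalar.
rewrite scalemxAl !scalerA -scalemxAl.
have bc0 : b^* != 0 by rewrite conjC_eq0.
have e : b^-1 * (b^-1^* * c) = b^-1^* + b^-1.
  by rewrite -ebc fmorphV; field; rewrite bc0 b0.
by rewrite scalerA e scalerDl opprB addrK subrK.
Qed.
End Unitary.

Lemma quad_delta k (D : 'M[C]_k) (i : 'I_k) : (ctr (delta_mx i 0 : 'cV[C]_k) *m D *m (delta_mx i 0 : 'cV[C]_k)) 0 0 = D i i.
Proof.
have -> : ctr (delta_mx i 0 : 'cV[C]_k) = (delta_mx 0 i : 'rV[C]_k).
  by apply/matrixP => a b; rewrite /ctr !mxE rmorph_nat andbC.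
by rewrite -rowE -colE !mxE.
Qed.

Lemma pd_sqrt k (P : 'M[C]_k) : pd P -> exists2 L, L \in unitmx & P = L *m ctr L.
Proof.
move=> PP; have uP := pd_unit PP; move: (PP) => [hP pP].
have nP : P \is normalmx by apply/normalmxP; rewrite -!ctrE hP.
set M := spectralmx P; set d := spectral_diag P.
have eP : P = invmx M *m diag_mx d *m M by apply/orthomx_spectralP.
have uM : M \is unitarymx := spectral_unitarymx P.
have iM : invmx M = ctr M by rewrite invmx_unitary // ctrE.
have MM : M *m ctr M = 1%:M by rewrite ctrE; apply/unitarymxP.
have uM' : M \in unitmx by case: (mulmx1_unit MM).
have eD : diag_mx d = M *m P *m ctr M.
  by rewrite eP iM !mulmxA MM mul1mx -mulmxA MM mulmx1.
have pD : pd (diag_mx d) by rewrite eD; apply: pd_congr.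
have dpos i : 0 < d 0 i.
  have e0 : (delta_mx i 0 : 'cV[C]_k) != 0.
    by apply/eqP => /matrixP /(_ i 0); rewrite !mxE !eqxx /= => /eqP; rewrite oner_eq0.
  by have := pD.2 _ e0; rewrite quad_delta mxE eqxx mulr1n.
set s := \row_i sqrtC (d 0 i).
have ess : diag_mx s *m ctr (diag_mx s) = diag_mx d.
  apply/matrixP => i j; rewrite mul_diag_mx !mxE.
  have [->|nij] := eqVneq i j; last first.
    by rewrite !mulr0n rmorph0 mulr0.
  rewrite ?eqxx !mulr1n conj_Creal ?ger0_real ?sqrtC_ge0 ?(ltW (dpos j)) //.
  by rewrite -expr2 sqrtCK.
have eL : P = ctr M *m diag_mx s *m ctr (ctr M *m diag_mx s).
  by rewrite ctrM ctrK mulmxA -(mulmxA (ctr M)) ess eP iM.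
exists (ctr M *m diag_mx s) => //.
by move: uP; rewrite {1}eL unitmx_mul => /andP[].
Qed.

Lemma core k (P Q : 'M[C]_k) (a b : 'cV[C]_k) : pd P -> pd Q -> qf a P = qf b Q ->
  exists2 M, M \in unitmx & M *m P *m ctr M = Q /\ M *m a = b.
Proof.
move=> pP pQ e.
have [Lp uLp eP] := pd_sqrt pP; have [Lq uLq eQ] := pd_sqrt pQ.
set u := invmx Lp *m a; set v := invmx Lq *m b.
have huv : dot u u = dot v v.
  move: e; rewrite /qf /dot eP eQ !invmxM ?ctr_unit // -!ctr_inv /u /v !ctrM !mulmxA.
  by [].
have [U [hU eU]] := unitary_map huv.
have uU : U \in unitmx by case: (mulmx1_unit hU).
exists (Lq *m U *m invmx Lp).
  by rewrite !unitmx_mul uLq uU unitmx_inv uLp.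
split; last by rewrite -!mulmxA -/u eU /v mulKVmx.
have e1 : ctr Lp *m ctr (invmx Lp) = 1%:M by rewrite -ctrM mulVmx // ctr1.
rewrite eP !ctrM !mulmxA mulmxKV // -(mulmxA _ (ctr Lp)) e1 mulmx1.
by rewrite -(mulmxA _ U) hU mulmx1.
Qed.
End Basics.

Section Main.
Variable R : realType.
Local Notation C := R[i].
Variables t r n3 : nat.
Local Notation N := (t + r + n3)%N.

Definition F1 (z : 'cV[C]_N) (S : 'M[C]_N) :=
  qf (dsubmx (xs (R:=R) z S)) (drsubmx (schur (R:=R) S)).
Definition F2 (z : 'cV[C]_N) (S : 'M[C]_N) := qf (R:=R) (dsubmx z) (drsubmx S).

Lemma z23E (z : 'cV[C]_N) (S : 'M[C]_N) : z23 z S = dsubmx (xs (R:=R) z S).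
Proof.
by rewrite /z23 /xs raddfB /= /z2 /S23 /z3 /S33 -!mul_dsub_mx.
Qed.

Lemma S23sE (S : 'M[C]_N) : S23s S = drsubmx (schur (R:=R) S).
Proof.
rewrite /S23s /schur /drsubmx raddfB /= raddfB /= /S22 /S23 /S32 /S33.
by rewrite -!mul_dsub_mx -mulmx_rsub.
Qed.

Lemma t1E (z : 'cV[C]_N) (S : 'M[C]_N) : t1 z S = if n3 == 0%N then [:: F1 z S] else [:: F1 z S; F2 z S].
Proof.
rewrite /t1 /F1 /F2 -z23E -S23sE; case: eqP => // h.
have e0 : ursubmx S = 0.
  by apply/matrixP => i j; exfalso; have := ltn_ord j; move: (nat_of_ord j) => m; rewrite h.
by rewrite /z23 /S23s /S23 e0 raddf0 !mul0mx !subr0.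
Qed.

Lemma qf_size0 n (x : 'cV[C]_n) (S : 'M[C]_n) : n = 0%N -> qf x S = 0.
Proof.
move=> h; rewrite /qf mxE big1 // => j _; exfalso; have := ltn_ord j; move: (nat_of_ord j) => m; by rewrite h.
Qed.

Lemma qf_zero n (S : 'M[C]_n) : qf 0 S = 0.
Proof. by rewrite /qf ctr0 !mul0mx mxE. Qed.


Lemma inv_part (z : 'cV[C]_N) (S G : 'M[C]_N) (f : 'cV[C]_N) :
  pd S -> in_calG G -> in_calF f ->
  t1 (G *m z + f) (G *m S *m ctr G) = t1 z S.
Proof.
move=> pS [uG [[dl0 dl0'] [u1 u2 u3]]] [f1 f2].
have [hS _] := pS.
have udS : drsubmx S \in unitmx := pd_unit (pd_dr pS).
have pU := pd_schur pS.
have udU : drsubmx (schur S) \in unitmx := pd_unit (pd_dr pU).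
set A := ulsubmx G; set B := ursubmx G; set D := drsubmx G.
have eG : G = block_mx A B 0 D by rewrite -dl0 submxK.
have eA : A = block_mx (ulsubmx A) (ursubmx A) 0 (drsubmx A) by rewrite -dl0' submxK.
have [e1 e2 e3 e4] := level_inv A B z u3 udS hS f2.
rewrite -eG in e1 e2 e3 e4.
have [i1 i2 _ _] := level_inv (ulsubmx A) (ursubmx A) (xs z S) u2 udU pU.1 f1.
rewrite -eA in i1 i2.
rewrite !t1E /F1 /F2 e1 e2 e3 e4 i1 i2 !qf_inv //.
Qed.

End Main.

Lemma cons1_inj (T : Type) (a b : T) : [:: a] = [:: b] -> a = b.
Proof. by case. Qed.
Lemma cons2_inj (T : Type) (a b c d : T) : [:: a; c] = [:: b; d] -> a = b /\ c = d.
Proof. by case. Qed.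
Section M.
Variable R : realType.
Local Notation C := R[i].
Variables t r n3 : nat.
Local Notation N := (t + r + n3)%N.
Lemma eF (z w : 'cV[C]_N) (S T : 'M[C]_N) : t1 z S = t1 w T -> F1 z S = F1 w T /\ F2 z S = F2 w T.
Proof.
rewrite !t1E; case: eqP => [h|_] H.
  split; first exact: (cons1_inj H).
  by rewrite /F2 (qf_size0 _ _ h) (qf_size0 _ _ h).
exact: (cons2_inj H).
Qed.

Lemma max_part (z w : 'cV[C]_N) (S T : 'M[C]_N) :
  pd S -> pd T -> t1 z S = t1 w T ->
  exists G f, [/\ in_calG G, in_calF f, z = G *m w + f & S = G *m T *m ctr G].
Proof.
move=> pS pT /eF [e1 e2]; move: (pS) (pT) => [hS _] [hT _].
have pdS := pd_dr pS; have pdT := pd_dr pT.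
have uS := pd_unit pdS; have uT := pd_unit pdT.
have [D uD [eD1 eD2]] := core pdT pdS (esym e2).
have pU := pd_schur pT; have pV := pd_schur pS.
have [A3 uA3 [eA31 eA32]] := core (pd_dr pU) (pd_dr pV) (esym e1).
have [A1 uA1 [eA11 _]] := core (pd_schur pU) (pd_schur pV) (etrans (qf_zero _) (esym (qf_zero _))).
have [GA1 GA2] := level_max pV.1 pU.1 (pd_unit (pd_dr pV)) (pd_unit (pd_dr pU)) eA11 eA31 eA32.
set GA := block_mx A1 _ 0 A3 in GA1 GA2.
have [G1 G2] := level_max hS hT uS uT GA1 eD1 eD2.
set G := block_mx GA _ 0 D in G1 G2.
exists G, (z - G *m w); split.
- split; first by rewrite unitmxE /G det_ublock /GA det_ublock !unitrM -!unitmxE uA1 uA3 uD.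
  split; first by split; [apply: block_mxKdl | rewrite block_mxKul; apply: block_mxKdl].
  by split; [rewrite !block_mxKul | rewrite block_mxKul block_mxKdr | rewrite block_mxKdr].
- by split; [rewrite G2 col_mxKu GA2; apply: col_mxKd | rewrite G2; apply: col_mxKd].
- by rewrite addrC subrK.
- by rewrite G1.
Qed.
End M.

Unset Implicit Arguments.

Theorem proposition1 (R : realType) (t r n3 K : nat) :
  (2 <= t + r + n3)%N -> (1 <= t)%N -> (1 <= r)%N -> (t + r + n3 <= K)%N ->
  maximal_invariant (@t1 R t r n3).
Proof.
move=> _ _ _ _; split.
  move=> [z S] [G f] hx [hG hf] /=.
  exact: inv_part hx hG hf.
move=> [z S] [w T] hx hy /= e.
have [G [f [hG hf ez eS]]] := max_part hx hy e.
by exists (G, f) => //; rewrite /act /= -ez -eS.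
Qed.
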